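(* Let $a_1,\dots,a_n$ be positive integers and $B,k$ integers with $\sum_{i=1}^n a_i=Bk$. Let $G$ be the complete bipartite graph $K_{k,n}$ with parts $\{v_1,\dots,v_k\}$ and $\{w_1,\dots,w_n\}$, where every edge incident to $w_i$ has weight $a_i$, and put target outdegrees $d_{w_i}=a_i$ and $d_{v_j}=Bk-B$. Then $\{a_1,\dots,a_n\}$ (as a multiset) can be partitioned into $k$ parts each with sum exactly $B$ if and only if $G$ has an orientation in which every vertex $u$ has total weight of outgoing edges exactly $d_u$.
   Context: An orientation of an undirected graph chooses a direction for each edge; the out-weight of a vertex is the sum of weights of the edges directed out of it. *)

(* Defs.v *)
From mathcomp Require Import all_boot all_order all_algebra.
Set Implicit Arguments. Unset Strict Implicit. Unset Printing Implicit Defensive.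
Import Order.TTheory GRing.Theory Num.Theory.
Local Open Scope ring_scope.

(* A weighted undirected (multi)graph: vertex type V, edge type E, each edge
   e has two endpoints [ends e] and an integer weight [wt e].
   An orientation is o : E -> bool; [o e = true] directs e from (ends e).1
   to (ends e).2, [o e = false] from (ends e).2 to (ends e).1. *)
Definition tail (V E : finType) (ends : E -> V * V) (o : E -> bool) (e : E) : V :=
  if o e then (ends e).1 else (ends e).2.

Definition outweight (V E : finType) (ends : E -> V * V) (wt : E -> int)
    (o : E -> bool) (u : V) : int :=
  \sum_(e : E | tail ends o e == u) wt e.

(* The complete bipartite graph K_{k,n}: vertices inl j = v_j, inr i = w_i;
   one edge (j, i) joining v_j and w_i for every pair. *)
Definition Kkn_ends (k n : nat) (e : 'I_k * 'I_n) : ('I_k + 'I_n) * ('I_k + 'I_n) :=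
  (inl e.1, inr e.2).

Definition Kkn_wt (k n : nat) (a : 'I_n -> nat) (e : 'I_k * 'I_n) : int :=
  (a e.2)%:Z.

Definition Kkn_target (k n : nat) (a : 'I_n -> nat) (B : int) (u : 'I_k + 'I_n) : int :=
  match u with
  | inl _ => B * k%:Z - B
  | inr i => (a i)%:Z
  end.

Definition partitionable (k n : nat) (a : 'I_n -> nat) (B : int) : Prop :=
  exists p : 'I_n -> 'I_k, forall j : 'I_k, (\sum_(i | p i == j) (a i)%:Z) = B.

(* Main.v *)
Require Import Defs.
From mathcomp Require Import all_boot all_order all_algebra.
Import Order.TTheory GRing.Theory Num.Theory.
Local Open Scope ring_scope.
Section S.
Variables (n k : nat) (a : 'I_n -> nat) (o : 'I_k * 'I_n -> bool).
Lemma sum_pair (F : 'I_k * 'I_n -> int) :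
  \sum_(e : 'I_k * 'I_n) F e = \sum_(i < n) \sum_(j < k) F (j, i).
Proof. by rewrite exchange_big pair_big /=; apply: eq_bigr => -[]. Qed.

Lemma out_inr i : outweight (@Kkn_ends k n) (@Kkn_wt k n a) o (inr i)
   = (a i)%:Z *+ #|[pred j | ~~ o (j, i)]|.
Proof.
rewrite /outweight big_mkcond sum_pair (bigD1 i) //= [X in _ + X]big1 => [|i' ne].
  rewrite addr0 -sumr_const [RHS]big_mkcond /=; apply: eq_bigr => j _.
  by rewrite /tail /Kkn_ends /Kkn_wt inE /=; case: (o (j, i)) => /=; rewrite ?eqxx.
apply: big1 => j _; rewrite /tail /Kkn_ends /=; case: (o (j, i')) => //=.
by rewrite inj_eq ?(negbTE ne) //; exact: inr_inj.
Qed.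

Lemma out_inl j : outweight (@Kkn_ends k n) (@Kkn_wt k n a) o (inl j)
   = \sum_(i | o (j, i)) (a i)%:Z.
Proof.
rewrite /outweight big_mkcond sum_pair [RHS]big_mkcond; apply: eq_bigr => i _.
rewrite (bigD1 j) //= [X in _ + X]big1 => [|j' ne].
  by rewrite addr0 /tail /Kkn_ends /Kkn_wt /=; case: (o (j, i)) => //=; rewrite eqxx.
rewrite /tail /Kkn_ends /=; case: (o (j', i)) => //=.
by rewrite inj_eq ?(negbTE ne) //; exact: inl_inj.
Qed.

Lemma card_lem (x c : nat) : (0 < x)%N -> (x%:Z) *+ c = x%:Z -> c = 1%N.
move=> xp.
rewrite -mulr_natr natz -PoszM => -[] /eqP.
by rewrite -[X in _ == X]muln1 eqn_mul2l eqn0Ngt xp /= => /eqP.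
Qed.
End S.

Theorem lemma6p4 (n k : nat) (a : 'I_n -> nat) (B : int)
  (apos : forall i, (0 < a i)%N)
  (hsum : (\sum_(i < n) (a i)%:Z) = B * k%:Z) :
  @partitionable k n a B <->
  exists o : 'I_k * 'I_n -> bool,
    forall u : 'I_k + 'I_n,
      outweight (@Kkn_ends k n) (@Kkn_wt k n a) o u = @Kkn_target k n a B u.
Proof.
split.
  move=> [p hp]; exists (fun e => p e.2 != e.1) => -[j|i] /=.
    rewrite out_inl /=.
    have := hsum; rewrite (bigID (fun i => p i == j)) /= hp => h.
    rewrite -h addrC addrK.
    by apply: eq_bigl => i; rewrite eq_sym.
  rewrite out_inr.
  have -> : #|[pred j | ~~ (p i != j)]| = 1%N.
    rewrite -(card1 (p i)); apply: eq_card => j; rewrite !inE negbK eq_sym.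
    done.
  by [].
move=> [o ho].
have hc i : #|[pred j | ~~ o (j, i)]| = 1%N.
  apply: (@card_lem (a i) _ (apos i)); rewrite -out_inr; exact: (ho (inr i)).
pose p i := sval (mem_card1 (hc i)).
have hp i j : (~~ o (j, i)) = (j == p i).
  by have := svalP (mem_card1 (hc i)) j; rewrite !inE.
exists p => j.
have := ho (inl j); rewrite out_inl /= => h.
have := hsum; rewrite (bigID (fun i => o (j, i))) /= h => h2.
have -> : \sum_(i | p i == j) (a i)%:Z = \sum_(i | ~~ o (j, i)) (a i)%:Z.
  by apply: eq_bigl => i; rewrite hp eq_sym.
by apply: (addrI (B * k%:Z - B)); rewrite h2 subrK.
Qed.
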